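(* Let $P$ be a finite point set in general position and let $p\in P$ have degree exactly one in $G_\bigtriangledown(P)$. Suppose there are distinct $i,j\in\{1,2,3\}$ with $V_i(p)\neq\emptyset$ and $V_j(p)\neq\emptyset$, and let $k$ be the element of $\{1,2,3\}\setminus\{i,j\}$. Then $\overline{V}_k(p)\neq\emptyset$.
   Context: A finite point set $P$ in the plane is in general position if no line through two points of $P$ makes an angle of $0^\circ$, $60^\circ$ or $120^\circ$ with the horizontal. A down-triangle is an equilateral triangle with one side parallel to the $x$-axis and the corner opposite to this side below that side. $G_\bigtriangledown(P)$ is the graph with vertex set $P$ in which $p,q$ are adjacent iff some (closed) down-triangle contains $p$ and $q$ and no other point of $P$. For a point $p$, let $A_i(p)$ ($i=1,\dots,6$) be the closed cone with apex $p$ between the rays from $p$ at angles $(i-1)\pi/3$ and $i\pi/3$ measured counter-clockwise from the positive $x$-axis; $C_1(p)=A_1(p)$, $C_2(p)=A_3(p)$, $C_3(p)=A_5(p)$ and $\overline{C}_1(p)=A_4(p)$, $\overline{C}_2(p)=A_6(p)$, $\overline{C}_3(p)=A_2(p)$. For $i\in\{1,2,3\}$, $V_i(p)=\{p'\in P\setminus\{p\}: p'\in C_i(p)\}$ and $\overline{V}_i(p)=\{p'\in P\setminus\{p\}: p'\in\overline{C}_i(p)\}$. *)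

(* Defs.v *)
(* points of the plane are pairs over an arbitrary real closed field R
   (the statement is purely order-algebraic, needing only sqrt 3). *)
From HB Require Import structures.
From mathcomp Require Import all_boot all_order all_algebra.
Set Implicit Arguments. Unset Strict Implicit. Unset Printing Implicit Defensive.
Import Order.TTheory GRing.Theory Num.Theory.
Local Open Scope ring_scope.

Definition pt (R : rcfType) := (R * R)%type.

Definition s3 (R : rcfType) : R := Num.sqrt 3.

(* General position: no line through two distinct points of P makes an angle of
   0, 60 or 120 degrees with the horizontal, i.e. its direction (dx,dy) is not
   parallel to (1,0), (1,sqrt3) or (-1,sqrt3). *)
Definition general_position (R : rcfType) (P : seq (pt R)) : Prop :=
  forall p q, p \in P -> q \in P -> p != q ->
    let dx := q.1 - p.1 in let dy := q.2 - p.2 in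
    [/\ dy != 0, dy != s3 R * dx & dy != - (s3 R * dx)].

(* Closed down-triangle with bottom apex (a,b) and height h (top side on y = b + h,
   other sides of slopes +-sqrt3 through the apex). *)
Definition in_down_tri (R : rcfType) (a b h : R) (q : pt R) : bool :=
  (q.2 <= b + h) && (s3 R * `|q.1 - a| <= q.2 - b).

Definition adj (R : rcfType) (P : seq (pt R)) (p q : pt R) : Prop :=
  p != q /\
  exists a b h : R, [/\ 0 < h, in_down_tri a b h p, in_down_tri a b h q &
     forall r, r \in P -> in_down_tri a b h r -> r = p \/ r = q].

Definition dir (R : rcfType) (m : nat) : pt R :=
  match (m %% 6)%N with
  | 0 => (1, 0)
  | 1 => (1/2, s3 R / 2)
  | 2 => (-(1/2), s3 R / 2)
  | 3 => (-1, 0)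
  | 4 => (-(1/2), -(s3 R / 2))
  | _ => (1/2, -(s3 R / 2))
  end.

(* A_n(p), n = 1..6: closed cone with apex p between the rays at angles
   (n-1)pi/3 and n pi/3, i.e. p + nonnegative combinations of the two directions. *)
Definition in_A (R : rcfType) (n : nat) (p q : pt R) : Prop :=
  exists u v : R, [/\ 0 <= u, 0 <= v &
    q = (p.1 + u * (dir R n.-1).1 + v * (dir R n).1,
         p.2 + u * (dir R n.-1).2 + v * (dir R n).2)].

(* C_1 = A_1, C_2 = A_3, C_3 = A_5 ; Cbar_1 = A_4, Cbar_2 = A_6, Cbar_3 = A_2. *)
Definition C_idx (i : nat) : nat := match i with 1 => 1 | 2 => 3 | _ => 5 end.
Definition Cbar_idx (i : nat) : nat := match i with 1 => 4 | 2 => 6 | _ => 2 end.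

Definition V_nonempty (R : rcfType) (P : seq (pt R)) (i : nat) (p : pt R) : Prop :=
  exists q, [/\ q \in P, q != p & in_A (C_idx i) p q].
Definition Vbar_nonempty (R : rcfType) (P : seq (pt R)) (i : nat) (p : pt R) : Prop :=
  exists q, [/\ q \in P, q != p & in_A (Cbar_idx i) p q].

Definition degree_one (R : rcfType) (P : seq (pt R)) (p : pt R) : Prop :=
  exists q, [/\ q \in P, adj P p q &
    forall q', q' \in P -> adj P p q' -> q' = q].

(* Main.v *)
Require Import Defs.
From HB Require Import structures.
From mathcomp Require Import all_boot all_order all_algebra.
From mathcomp Require Import lra ring.

Section Helpers.
Set Implicit Arguments. Unset Strict Implicit.
Import Order.TTheory GRing.Theory Num.Theory.
Local Open Scope ring_scope.

Definition f1 (R : rcfType) (q : pt R) : R := q.2 - s3 R * q.1.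
Definition f2 (R : rcfType) (q : pt R) : R := q.2 + s3 R * q.1.
Definition mx (R : rcfType) (x y : R) : R := if x <= y then y else x.
Definition mn (R : rcfType) (x y : R) : R := if x <= y then x else y.
Definition intri (R : rcfType) (Y c1 c2 : R) (q : pt R) : bool :=
  [&& q.2 <= Y, c1 <= f1 q & c2 <= f2 q].
Definition TY (R : rcfType) (p r : pt R) : R := mx p.2 r.2.
Definition TC1 (R : rcfType) (p r : pt R) : R := mn (f1 p) (f1 r).
Definition TC2 (R : rcfType) (p r : pt R) : R := mn (f2 p) (f2 r).
Definition phi (R : rcfType) (p r : pt R) : R := 2 * TY p r - TC1 p r - TC2 p r.

Lemma s_pos (R : rcfType) : 0 < s3 R.
Proof. by rewrite /s3 sqrtr_gt0 ltr0n. Qed.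

Lemma mx_spec (R : rcfType) (x y : R) :
  (mx x y = y /\ x <= y) \/ (mx x y = x /\ y < x).
Proof. rewrite /mx; case: leP => h; [left|right]; by split. Qed.

Lemma mn_spec (R : rcfType) (x y : R) :
  (mn x y = x /\ x <= y) \/ (mn x y = y /\ y < x).
Proof. rewrite /mn; case: leP => h; [left|right]; by split. Qed.

Lemma tri_eq (R : rcfType) (Y c1 c2 : R) : c1 + c2 < 2 * Y ->
  exists a b h : R, 0 < h /\ forall q, in_down_tri a b h q = intri Y c1 c2 q.
Proof.
move=> hY; have hs := s_pos R.
have hs0 : s3 R != 0 by rewrite gt_eqF.
exists ((c2 - c1) / (2 * s3 R)), ((c1 + c2) / 2), (Y - (c1 + c2) / 2).
split; first lra.
have ha : s3 R * ((c2 - c1) / (2 * s3 R)) = (c2 - c1) / 2 by field.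
move=> q; rewrite /in_down_tri /intri /f1 /f2.
have -> : (c1 + c2) / 2 + (Y - (c1 + c2) / 2) = Y by ring.
rewrite -{1}(ger0_norm (ltW hs)) -normrM ler_norml.
rewrite mulrBr ha.
apply/idP/idP.
- case/andP=> h1 /andP[h2 h3]; rewrite h1 /=; apply/andP; split; lra.
- case/andP=> h1 /andP[h2 h3]; rewrite h1 /=; apply/andP; split; lra.
Qed.

Lemma gp3 (R : rcfType) (P : seq (pt R)) x y : general_position P ->
  x \in P -> y \in P -> x != y ->
  [/\ x.2 < y.2 \/ y.2 < x.2, f1 x < f1 y \/ f1 y < f1 x
    & f2 x < f2 y \/ f2 y < f2 x].
Proof.
move=> G hx hy nxy; case: (G x y hx hy nxy) => /=.
rewrite /f1 /f2 !neq_lt => /orP[]h1 /orP[]h2 /orP[]h3; split; lra.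
Qed.

Lemma intri_p (R : rcfType) (p r : pt R) : intri (TY p r) (TC1 p r) (TC2 p r) p.
Proof.
rewrite /intri /TY /TC1 /TC2.
case: (mx_spec p.2 r.2) => [[-> h]|[-> h]];
case: (mn_spec (f1 p) (f1 r)) => [[-> h1]|[-> h1]];
case: (mn_spec (f2 p) (f2 r)) => [[-> h2]|[-> h2]];
apply/and3P; split; lra.
Qed.

Lemma intri_r (R : rcfType) (p r : pt R) : intri (TY p r) (TC1 p r) (TC2 p r) r.
Proof.
rewrite /intri /TY /TC1 /TC2.
case: (mx_spec p.2 r.2) => [[-> h]|[-> h]];
case: (mn_spec (f1 p) (f1 r)) => [[-> h1]|[-> h1]];
case: (mn_spec (f2 p) (f2 r)) => [[-> h2]|[-> h2]];
apply/and3P; split; lra.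
Qed.

Lemma tri_sub (R : rcfType) (p r x : pt R) : intri (TY p r) (TC1 p r) (TC2 p r) x ->
  [/\ TY p x <= TY p r, TC1 p r <= TC1 p x & TC2 p r <= TC2 p x].
Proof.
have := intri_p p r; rewrite /intri /TY /TC1 /TC2 => /and3P[a1 a2 a3] /and3P[b1 b2 b3].
case: (mx_spec p.2 x.2) => [[-> h]|[-> h]];
case: (mn_spec (f1 p) (f1 x)) => [[-> h1]|[-> h1]];
case: (mn_spec (f2 p) (f2 x)) => [[-> h2]|[-> h2]]; split; lra.
Qed.

Lemma intri_trans (R : rcfType) (p r r' x : pt R) :
  intri (TY p r') (TC1 p r') (TC2 p r') x ->
  intri (TY p r) (TC1 p r) (TC2 p r) r' ->
  intri (TY p r) (TC1 p r) (TC2 p r) x.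
Proof.
move=> hx /tri_sub [h1 h2 h3]; move: hx; rewrite /intri => /and3P[b1 b2 b3].
apply/and3P; split; lra.
Qed.

Lemma tri_valid (R : rcfType) (P : seq (pt R)) p r : general_position P ->
  p \in P -> r \in P -> r != p -> TC1 p r + TC2 p r < 2 * TY p r.
Proof.
move=> G hp hr nrp; have [g0 g1 g2] := gp3 G hp hr (ltac:(by rewrite eq_sym)).
move: g0 g1 g2; rewrite /TY /TC1 /TC2 /f1 /f2.
case: (mx_spec p.2 r.2) => [[-> h]|[-> h]];
case: (mn_spec (f1 p) (f1 r)) => [[-> h1]|[-> h1]];
case: (mn_spec (f2 p) (f2 r)) => [[-> h2]|[-> h2]]; move: h1 h2; rewrite /f1 /f2 => h1 h2 g0 g1 g2; lra.
Qed.

Lemma phi_strict (R : rcfType) (P : seq (pt R)) p r' r0 : general_position P ->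
  p \in P -> r' \in P -> r0 \in P -> r0 != r' -> r' != p ->
  intri (TY p r') (TC1 p r') (TC2 p r') r0 -> phi p r0 < phi p r'.
Proof.
move=> G hp hr' hr0 n0r nrp hin.
have [g0 g1 g2] := gp3 G hp hr' (ltac:(by rewrite eq_sym)).
have [k0 k1 k2] := gp3 G hr0 hr' n0r.
move: hin (intri_p p r0); rewrite /phi /intri /TY /TC1 /TC2 => /and3P[b1 b2 b3] /and3P[c1 c2 c3].
move: g0 g1 g2 k0 k1 k2 b1 b2 b3 c1 c2 c3.
case: (mx_spec p.2 r'.2) => [[-> h]|[-> h]];
case: (mn_spec (f1 p) (f1 r')) => [[-> h1]|[-> h1]];
case: (mn_spec (f2 p) (f2 r')) => [[-> h2]|[-> h2]];
case: (mx_spec p.2 r0.2) => [[-> h']|[-> h']];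
case: (mn_spec (f1 p) (f1 r0)) => [[-> h1']|[-> h1']];
case: (mn_spec (f2 p) (f2 r0)) => [[-> h2']|[-> h2']];
move: h1 h2 h1' h2'; rewrite /f1 /f2 => *; lra.
Qed.

Lemma exists_min (R : rcfType) (T : eqType) (s : seq T) (Pr : pred T) (f : T -> R) :
  has Pr s -> exists2 x, (x \in s) && Pr x & forall y, y \in s -> Pr y -> f x <= f y.
Proof.
elim: s => [//|a s IH] /=.
case hs: (has Pr s).
- case: (IH hs) => x /andP[xs px] hmin _.
  case pa: (Pr a); last first.
    exists x; first by rewrite inE xs orbT px.
    move=> y; rewrite inE => /orP[/eqP ->|ys]; first by rewrite pa.
    exact: hmin.
  case: (leP (f a) (f x)) => h.
    exists a; first by rewrite inE eqxx pa.
    move=> y; rewrite inE => /orP[/eqP ->|ys py] //.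
    exact: le_trans h (hmin y ys py).
  exists x; first by rewrite inE xs orbT px.
  move=> y; rewrite inE => /orP[/eqP ->|ys]; first by move=> _; exact: ltW.
  exact: hmin.
- rewrite orbF => pa; exists a; first by rewrite inE eqxx pa.
  move=> y; rewrite inE => /orP[/eqP ->|ys py] //.
  by move/negbT: hs => /hasPn /(_ y ys); rewrite py.
Qed.

Lemma neighbor (R : rcfType) (P : seq (pt R)) p r : general_position P ->
  p \in P -> r \in P -> r != p ->
  exists r', [/\ r' \in P, adj P p r' & intri (TY p r) (TC1 p r) (TC2 p r) r'].
Proof.
move=> G hp hr nrp.
pose Q := fun x => (x != p) && intri (TY p r) (TC1 p r) (TC2 p r) x.
have hQ : has Q P by apply/hasP; exists r => //; rewrite /Q nrp /= intri_r.
case: (exists_min (phi p) hQ) => r' /andP[hr' /andP[nr'p inr']] hmin.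
exists r'; split => //.
split; first by rewrite eq_sym.
have [a [b [h [h0 E]]]] := tri_eq (tri_valid G hp hr' nr'p).
exists a, b, h; split => //; rewrite ?E ?intri_p ?intri_r //.
move=> r0 hr0; rewrite E => in0.
case: (eqVneq r0 p) => [->|n0p]; first by left.
case: (eqVneq r0 r') => [->|n0r]; first by right.
exfalso.
have := hmin r0 hr0; rewrite /Q n0p /= (intri_trans in0 inr') => /(_ isT).
have := phi_strict G hp hr' hr0 n0r nr'p in0. lra.
Qed.

Definition sideP (R : rcfType) (i : nat) (p q : pt R) : Prop :=
  match i with 1%N => f2 p <= f2 q | 2%N => f1 p <= f1 q | _ => q.2 <= p.2 end.

Lemma Vside (R : rcfType) (P : seq (pt R)) p i : general_position P -> p \in P ->
  i \in [:: 1; 2; 3]%N -> V_nonempty P i p ->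
  exists r', [/\ r' \in P, adj P p r' & sideP i p r'].
Proof.
move=> G hp hi [u [hu nup hA]].
have [r' [hr' adjr inr]] := neighbor G hp hu nup.
exists r'; split => //.
have hs := s_pos R.
move: inr; rewrite /intri /TY /TC1 /TC2 => /and3P[b1 b2 b3].
move: hi hA; rewrite !inE => /orP[/eqP ->|/orP[/eqP ->|/eqP ->]];
rewrite /in_A /C_idx /dir /= => [[a [c [ha hc eu]]]]; rewrite /sideP;
move: b1 b2 b3; rewrite eu /f1 /f2 /=.
- have h1 : 0 <= s3 R * a by rewrite mulr_ge0 // ltW.
  have h2 : 0 <= s3 R * c by rewrite mulr_ge0 // ltW.
  move=> b1 b2 b3; move: b3; rewrite /mn; case: ifP => _; lra.
- have h1 : 0 <= s3 R * a by rewrite mulr_ge0 // ltW.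
  have h2 : 0 <= s3 R * c by rewrite mulr_ge0 // ltW.
  move=> b1 b2 b3; move: b2; rewrite /mn; case: ifP => _; lra.
- have h1 : 0 <= s3 R * a by rewrite mulr_ge0 // ltW.
  have h2 : 0 <= s3 R * c by rewrite mulr_ge0 // ltW.
  move=> b1 b2 b3; move: b1; rewrite /mx; case: ifP => _; lra.
Qed.

Lemma pair_eq' (R : rcfType) (q : pt R) a b : q.1 = a -> q.2 = b -> q = (a, b).
Proof. by case: q => /= ? ? -> ->. Qed.

Lemma A2 (R : rcfType) (p q : pt R) : f2 p <= f2 q -> f1 p <= f1 q -> in_A 2 p q.
Proof.
move=> h1 h2; have hs := s_pos R; have hs0 : s3 R != 0 by rewrite gt_eqF.
exists ((f2 q - f2 p) / s3 R), ((f1 q - f1 p) / s3 R); split.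
- by rewrite divr_ge0 ?subr_ge0 // ltW.
- by rewrite divr_ge0 ?subr_ge0 // ltW.
rewrite /dir /=; apply: pair_eq'; rewrite /f1 /f2; field => //.
Qed.

Lemma A4 (R : rcfType) (p q : pt R) : f1 p <= f1 q -> q.2 <= p.2 -> in_A 4 p q.
Proof.
move=> h1 h2; have hs := s_pos R; have hs0 : s3 R != 0 by rewrite gt_eqF.
exists ((f1 q - f1 p) / s3 R), (2 * (p.2 - q.2) / s3 R); split.
- by rewrite divr_ge0 ?subr_ge0 // ltW.
- by rewrite divr_ge0 ?mulr_ge0 ?subr_ge0 // ltW.
rewrite /dir /=; apply: pair_eq'; rewrite /f1 /f2; field => //.
Qed.

Lemma A6 (R : rcfType) (p q : pt R) : f2 p <= f2 q -> q.2 <= p.2 -> in_A 6 p q.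
Proof.
move=> h1 h2; have hs := s_pos R; have hs0 : s3 R != 0 by rewrite gt_eqF.
exists (2 * (p.2 - q.2) / s3 R), ((f2 q - f2 p) / s3 R); split.
- by rewrite divr_ge0 ?mulr_ge0 ?subr_ge0 // ltW.
- by rewrite divr_ge0 ?subr_ge0 // ltW.
rewrite /dir /=; apply: pair_eq'; rewrite /f1 /f2; field => //.
Qed.

End Helpers.

Theorem mainTheorem5 (R : rcfType) (P : seq (pt R)) (p : pt R) (i j k : nat) :
  general_position P -> p \in P -> degree_one P p ->
  i \in [:: 1; 2; 3]%N -> j \in [:: 1; 2; 3]%N -> k \in [:: 1; 2; 3]%N ->
  i != j -> k != i -> k != j ->
  V_nonempty P i p -> V_nonempty P j p ->
  Vbar_nonempty P k p.
Proof.
move=> G hp [q [hq adjq uq]] hi hj hk nij nki nkj Vi Vj.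
have [r1 [r1P a1 s1]] := Vside G hp hi Vi.
have [r2 [r2P a2 s2]] := Vside G hp hj Vj.
rewrite (uq r1 r1P a1) in s1; rewrite (uq r2 r2P a2) in s2.
have nqp : q != p by case: adjq => h _; rewrite eq_sym.
exists q; split => //.
move: hi hj hk nij nki nkj s1 s2; rewrite !inE.
move=> /or3P[]/eqP-> /or3P[]/eqP-> /or3P[]/eqP-> //= _ _ _ x y;
rewrite /Cbar_idx /sideP in x y *;
first [exact: A2 x y | exact: A2 y x | exact: A4 x y | exact: A4 y x
      | exact: A6 x y | exact: A6 y x].
Qed.
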